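(* For every nondeterministic multihead finite automaton $\mathcal M$ with input alphabet $\Sigma$ there is an interpretation $\pi:\Gamma_2\to\Sigma$ such that for every sufficiently long string $x\in\Sigma^\star$, the structure $x^\pi$ is isomorphic to the configuration graph of $\mathcal M$ on input $x$ (as a 2-pointed directed graph). Furthermore, $\pi$ can be expanded to an interpretation $\pi:(\Gamma_2,S)\to\Sigma$ such that $x^\pi$ is a successor expansion of that configuration graph. Moreover, $\pi$ can be taken quantifier-free.
   Context: A nondeterministic multihead finite automaton (NMFA) consists of a finite set $Q$ of states, a number $k$ of heads, an input alphabet $\Sigma$, a start state $q_0$, an accept state $q_f$, and a transition relation $\delta$ which, depending on the current state and the $k$-tuple of symbols in $\Sigma\cup\{\triangleright,\triangleleft\}$ read by the heads, allows a new state and a move vector in $\{-1,0,1\}^k$. The tape holds the input string between a left endmarker $\triangleright$ and a right endmarker $\triangleleft$; heads cannot write; a head reading $\triangleright$ (resp. $\triangleleft$) never moves left (resp. right); in state $q_f$ the transitions move every head left if possible and otherwise keep it in place. A configuration on input $x$ consists of the current state and the positions of the heads. The configuration graph on input $x$ is the 2-pointed directed graph whose vertices are the configurations on $x$, with an edge from $c$ to $c'$ iff $c'$ is reachable from $c$ in one step, and whose distinguished vertices $s,t$ are the initial configuration (state $q_0$, all heads at the left) and the final configuration (state $q_f$, all heads at the left). A string $x=x_0\cdots x_{n-1}\in\Sigma^\star$ is viewed as the structure with domain $\{0,\dots,n-1\}$, a unary predicate for each $\sigma\in\Sigma$ holding at $i$ iff $x_i=\sigma$, constants $\min=0$ and $\max=n-1$,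 and a successor function $S$ with $S(i)=i+1$; $\Sigma$ also denotes this signature. $\Gamma_2$ is the signature with a binary relation symbol $E$ and two constants $s,t$. A successor expansion of a finite structure $A$ is $(A,\min,\max,S)$ with $S$ the successor function of some linear order of the domain having endpoints $\min,\max$; $(\Gamma_2,S)$ is $\Gamma_2$ plus constants $\min,\max$ and the unary function symbol $S$. A $k$-ary interpretation $\pi:L\to K$ consists of a $K$-formula $\partial^\pi(\bar x)$ in a $k$-tuple of variables, for each $n$-ary relation symbol $r$ of $L$ a $K$-formula $r^\pi(\bar x_1,\dots,\bar x_n)$, and for each function or constant symbol of $L$ a definition by cases (cases given by $K$-formulas, values $k$-tuples of $K$-terms). It is quantifier-free if all these formulas are. For a $K$-structure $A$, $A^\pi$ is the $L$-structure with domain $\{\bar a\in A^k: A\models\partial^\pi(\bar a)\}$ and symbols interpreted by their translations. *)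

(* Defs.v *)
From HB Require Import structures.
From mathcomp Require Import all_boot.

(* A signature: relation symbols and function symbols with arities;
   constants are function symbols of arity 0. *)
Record signature := Signature {
  rel_sym : Type;
  rel_ar  : rel_sym -> nat;
  fun_sym : Type;
  fun_ar  : fun_sym -> nat }.
Arguments rel_ar {s} r.
Arguments fun_ar {s} f.

Record structure (L : signature) := MkStruct {
  dom   : Type;
  rel_i : forall r : rel_sym L, {ffun 'I_(rel_ar r) -> dom} -> Prop;
  fun_i : forall f : fun_sym L, {ffun 'I_(fun_ar f) -> dom} -> dom }.
Arguments dom {L} s.
Arguments rel_i {L} s r _.
Arguments fun_i {L} s f _.

Inductive term (L : signature) (V : Type) : Type :=
| TVar : V -> term L V
| TApp : forall f : fun_sym L, ('I_(fun_ar f) -> term L V) -> term L V.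
Arguments TVar {L V} v.
Arguments TApp {L V} f ts.

(* Formulas whose free variables range over V; quantifiers bind the
   new variable [None] in [option V]. *)
Inductive formula (L : signature) : Type -> Type :=
| FTrue  V : formula L V
| FFalse V : formula L V
| FEq  V : term L V -> term L V -> formula L V
| FRel V (r : rel_sym L) : ('I_(rel_ar r) -> term L V) -> formula L V
| FNot V : formula L V -> formula L V
| FAnd V : formula L V -> formula L V -> formula L V
| FOr  V : formula L V -> formula L V -> formula L V
| FImp V : formula L V -> formula L V -> formula L V
| FEx  V : formula L (option V) -> formula L V
| FAll V : formula L (option V) -> formula L V.
Arguments FTrue {L V}. Arguments FFalse {L V}. Arguments FEq {L V} t1 t2.
Arguments FRel {L V} r ts. Arguments FNot {L V} p. Arguments FAnd {L V} p q.
Arguments FOr {L V} p q. Arguments FImp {L V} p q. Arguments FEx {L V} p.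
Arguments FAll {L V} p.

Fixpoint teval {L : signature} (A : structure L) {V : Type}
    (t : term L V) (e : V -> dom A) : dom A :=
  match t with
  | TVar v => e v
  | TApp f ts => fun_i A f [ffun j => teval A (ts j) e]
  end.

Definition ext_env {D V : Type} (d : D) (e : V -> D) : option V -> D :=
  fun o => if o is Some v then e v else d.

Fixpoint sat {L : signature} (A : structure L) {V : Type}
    (phi : formula L V) : (V -> dom A) -> Prop :=
  match phi in formula _ V0 return (V0 -> dom A) -> Prop with
  | FTrue _ => fun _ => True
  | FFalse _ => fun _ => False
  | FEq _ t1 t2 => fun e => teval A t1 e = teval A t2 e
  | FRel _ r ts => fun e => rel_i A r [ffun j => teval A (ts j) e]
  | FNot _ p => fun e => ~ sat A p e
  | FAnd _ p q => fun e => sat A p e /\ sat A q e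
  | FOr _ p q => fun e => sat A p e \/ sat A q e
  | FImp _ p q => fun e => sat A p e -> sat A q e
  | FEx _ p => fun e => exists d : dom A, sat A p (ext_env d e)
  | FAll _ p => fun e => forall d : dom A, sat A p (ext_env d e)
  end.

Fixpoint qfree {L : signature} {V : Type} (phi : formula L V) : bool :=
  match phi with
  | FNot _ p => qfree p
  | FAnd _ p q | FOr _ p q | FImp _ p q => qfree p && qfree q
  | FEx _ _ | FAll _ _ => false
  | _ => true
  end.

(* A k-ary interpretation L -> K.  The i-th component of the j-th
   argument tuple of an m-ary symbol is the variable (j, i). *)
Definition fcases (K : signature) (m k : nat) :=
  seq (formula K ('I_m * 'I_k) * ('I_k -> term K ('I_m * 'I_k))).

Record interp (L K : signature) := MkInterp {
  iar  : nat;
  idom : formula K 'I_iar;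
  irel : forall r : rel_sym L, formula K ('I_(rel_ar r) * 'I_iar);
  ifun : forall f : fun_sym L, fcases K (fun_ar f) iar }.
Arguments iar {L K} i. Arguments idom {L K} i. Arguments irel {L K} i r.
Arguments ifun {L K} i f.

Definition qf_interp {L K : signature} (pi : interp L K) : Prop :=
  [/\ qfree (idom pi),
      forall r, qfree (irel pi r) &
      forall f, all (fun c => qfree c.1) (ifun pi f)].

(* Definition by cases: the value is given by the FIRST case whose
   condition holds; [case_value cs e w] says this value is w. *)
Fixpoint case_value {K : signature} (A : structure K) {V : Type} {k : nat}
    (cs : seq (formula K V * ('I_k -> term K V))) (e : V -> dom A)
    (w : 'I_k -> dom A) : Prop :=
  match cs with
  | [::] => False
  | c :: cs' =>
      (sat A c.1 e /\ forall i, teval A (c.2 i) e = w i)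
      \/ (~ sat A c.1 e /\ case_value A cs' e w)
  end.

Definition idomT {L K : signature} (pi : interp L K) (A : structure K) :=
  {v : {ffun 'I_(iar pi) -> dom A} | sat A (idom pi) (fun i => v i)}.

Definition tuple_env {L K : signature} (pi : interp L K) (A : structure K)
    (m : nat) (a : {ffun 'I_m -> idomT pi A}) : 'I_m * 'I_(iar pi) -> dom A :=
  fun p => sval (a p.1) p.2.
Arguments tuple_env {L K pi A m} a.

Definition interp_iso {L K : signature} (pi : interp L K) (A : structure K)
    (B : structure L) : Prop :=
  exists h : idomT pi A -> dom B,
  [/\ bijective h,
      forall r (a : {ffun 'I_(rel_ar r) -> idomT pi A}),
        sat A (irel pi r) (tuple_env a) <-> rel_i B r [ffun j => h (a j)] &
      forall f (a : {ffun 'I_(fun_ar f) -> idomT pi A}),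
        exists w : idomT pi A,
          case_value A (ifun pi f) (tuple_env a) (fun i => sval w i)
          /\ h w = fun_i B f [ffun j => h (a j)]].

Definition struct_iso {L : signature} (A B : structure L) : Prop :=
  exists h : dom A -> dom B,
  [/\ bijective h,
      forall r (a : {ffun 'I_(rel_ar r) -> dom A}),
        rel_i A r a <-> rel_i B r [ffun j => h (a j)] &
      forall f (a : {ffun 'I_(fun_ar f) -> dom A}),
        h (fun_i A f a) = fun_i B f [ffun j => h (a j)]].

Definition noargs {T : Type} : {ffun 'I_0 -> T} := ffun0 (card_ord 0).

Inductive G2fun := G2s | G2t.
Definition Gamma2 : signature :=
  Signature unit (fun _ : unit => 2) G2fun (fun _ : G2fun => 0).

Inductive G2Sfun := GSs | GSt | GSmin | GSmax | GSsucc.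
Definition G2S_ar (f : G2Sfun) : nat := if f is GSsucc then 1 else 0.
Definition Gamma2S : signature := Signature unit (fun _ : unit => 2) G2Sfun G2S_ar.

Inductive Sfun := Smin | Smax | Ssucc.
Definition S_ar (f : Sfun) : nat := if f is Ssucc then 1 else 0.
Definition SigmaSig (Sigma : finType) : signature :=
  Signature Sigma (fun _ : Sigma => 1) Sfun S_ar.

(* A nonempty string x = x_0 ... x_n as a Sigma-structure
   (domain {0..n}); S(i) = i+1 for i < n and S(n) = n. *)
Definition string_struct {Sigma : finType} {n : nat} (x : n.+1.-tuple Sigma) :
    structure (SigmaSig Sigma) :=
  @MkStruct (SigmaSig Sigma) 'I_n.+1
    (fun (s : Sigma) (a : {ffun 'I_1 -> 'I_n.+1}) => tnth x (a ord0) = s)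
    (fun f => match f return {ffun 'I_(S_ar f) -> 'I_n.+1} -> 'I_n.+1 with
              | Smin => fun _ => ord0
              | Smax => fun _ => ord_max
              | Ssucc => fun a => inord (minn (a ord0).+1 n)
              end).

Definition expand_interp {Sigma : finType} (pi : interp Gamma2 (SigmaSig Sigma))
    (cmin cmax : fcases (SigmaSig Sigma) 0 (iar pi))
    (cS : fcases (SigmaSig Sigma) 1 (iar pi)) : interp Gamma2S (SigmaSig Sigma) :=
  @MkInterp Gamma2S (SigmaSig Sigma) (iar pi) (idom pi) (irel pi)
    (fun f => match f return fcases (SigmaSig Sigma) (G2S_ar f) (iar pi) with
              | GSs => ifun pi G2s
              | GSt => ifun pi G2t
              | GSmin => cmin
              | GSmax => cmax
              | GSsucc => cS
              end).

Definition reduct (B : structure Gamma2S) : structure Gamma2 :=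
  @MkStruct Gamma2 (dom B) (rel_i B)
    (fun f => match f return {ffun 'I_(fun_ar (s := Gamma2) f) -> dom B} -> dom B with
              | G2s => fun a => fun_i B GSs a
              | G2t => fun a => fun_i B GSt a
              end).

Definition is_succ_expansion (B : structure Gamma2S) : Prop :=
  let mn := fun_i B GSmin noargs in
  let mx := fun_i B GSmax noargs in
  let S b := fun_i B GSsucc [ffun _ : 'I_1 => b] in
  exists lt : dom B -> dom B -> Prop,
     [/\ (forall a, ~ lt a a),
         (forall a b c, lt a b -> lt b c -> lt a c) &
         (forall a b, a <> b -> lt a b \/ lt b a)]
  /\
     (forall b, b <> mn -> lt mn b) /\ (forall b, b <> mx -> lt b mx)
  /\
     (forall b, b <> mx -> lt b (S b) /\ forall c, ~ (lt b c /\ lt c (S b)))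
  /\ S mx = mx.

Inductive tsym (Sigma : Type) := Sym of Sigma | LEnd | REnd.
Arguments Sym {Sigma} s. Arguments LEnd {Sigma}. Arguments REnd {Sigma}.
Inductive move := MLeft | MStay | MRight.

Record nmfa (Sigma : finType) := MkNmfa {
  state : finType;
  heads : nat;
  q_start : state;
  q_acc : state;
  delta : state -> {ffun 'I_heads -> tsym Sigma} -> state ->
          {ffun 'I_heads -> move} -> bool }.
Arguments state {Sigma} _. Arguments heads {Sigma} _.
Arguments q_start {Sigma} _. Arguments q_acc {Sigma} _.
Arguments delta {Sigma _} _ _ _ _.

Definition nmfa_wf {Sigma : finType} (M : nmfa Sigma) : Prop :=
  [/\ (forall q a q' m i, @delta _ M q a q' m -> a i = LEnd -> m i <> MLeft),
      (forall q a q' m i, @delta _ M q a q' m -> a i = REnd -> m i <> MRight) &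
      (forall a q' m, delta (q_acc M) a q' m <->
         (q' = q_acc M /\
          forall i, m i = match a i with LEnd => MStay | _ => MLeft end))].

Definition step (p : nat) (m : move) : nat :=
  match m with MLeft => p.-1 | MStay => p | MRight => p.+1 end.

(* Tape for input x of length n+1: position 0 holds |>, positions
   1..n+1 hold x_0..x_n, position n+2 holds <|. *)
Definition tape_sym {Sigma : finType} {n : nat} (x : n.+1.-tuple Sigma)
    (p : nat) : tsym Sigma :=
  if p == 0 then LEnd else if p == n.+2 then REnd
  else Sym (nth (thead x) x p.-1).

Definition config {Sigma : finType} (M : nmfa Sigma) (n : nat) : Type :=
  (state M * {ffun 'I_(heads M) -> 'I_n.+3})%type.

Definition cedge {Sigma : finType} (M : nmfa Sigma) {n : nat}
    (x : n.+1.-tuple Sigma) (c c' : config M n) : Prop :=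
  exists m : {ffun 'I_(heads M) -> move},
    delta c.1 [ffun i => tape_sym x (c.2 i)] c'.1 m /\
    forall i, val (c'.2 i) = step (c.2 i) (m i).

Definition config_graph {Sigma : finType} (M : nmfa Sigma) {n : nat}
    (x : n.+1.-tuple Sigma) : structure Gamma2 :=
  @MkStruct Gamma2 (config M n)
    (fun _ (a : {ffun 'I_2 -> config M n}) => cedge M x (a ord0) (a ord_max))
    (fun f => match f return {ffun 'I_(fun_ar (s := Gamma2) f) -> config M n} -> config M n with
              | G2s => fun _ => (q_start M, [ffun _ => ord0])
              | G2t => fun _ => (q_acc M, [ffun _ => ord0])
              end).

(* Main.v *)
Require Import Defs.
From HB Require Import structures.
From mathcomp Require Import all_boot zify.
From Stdlib Require Import ProofIrrelevance Classical.
Set Implicit Arguments. Unset Strict Implicit. Unset Printing Implicit Defensive.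

Fixpoint prodl (rs : seq nat) : nat := if rs is r :: rs' then r * prodl rs' else 1.
Fixpoint rk (rs ds : seq nat) : nat :=
  match rs, ds with r :: rs', d :: ds' => d * prodl rs' + rk rs' ds' | _, _ => 0 end.
Fixpoint bnd (rs ds : seq nat) : bool :=
  match rs, ds with
  | [::], [::] => true
  | r :: rs', d :: ds' => (d < r) && bnd rs' ds'
  | _, _ => false end.
Fixpoint allmx (rs ds : seq nat) : bool :=
  match rs, ds with
  | [::], [::] => true
  | r :: rs', d :: ds' => (d == r.-1) && allmx rs' ds'
  | _, _ => false end.
Fixpoint inc (rs ds : seq nat) : seq nat :=
  match rs, ds with
  | r :: rs', d :: ds' =>
      if allmx rs' ds' then (if d.+1 < r then d.+1 :: nseq (size ds') 0 else ds)
      else d :: inc rs' ds'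
  | _, _ => ds end.

Lemma bnd_size rs ds : bnd rs ds -> size ds = size rs.
Proof. elim: rs ds => [|r rs IH] [|d ds] //= /andP[_ /IH] ->. by []. Qed.

Lemma allmx_size rs ds : allmx rs ds -> size ds = size rs.
Proof. elim: rs ds => [|r rs IH] [|d ds] //= /andP[_ /IH] ->. by []. Qed.

Lemma bndP rs ds : bnd rs ds <-> size ds = size rs /\ forall i, i < size rs -> nth 0 ds i < nth 0 rs i.
Proof.
elim: rs ds => [|r rs IH] [|d ds] //=; try by split=> // -[].
rewrite -(rwP andP) IH; split.
  move=> [dr [-> H]]; split=> // -[|i] //= /H.  by [].
move=> [[Hs] H]; split; first exact: (H 0).
by split=> // i Hi; apply: (H i.+1).
Qed.

Lemma allmxP rs ds : allmx rs ds <-> size ds = size rs /\ forall i, i < size rs -> nth 0 ds i = (nth 0 rs i).-1.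
Proof.
elim: rs ds => [|r rs IH] [|d ds] //=; try by split=> // -[].
rewrite -(rwP andP) IH; split.
  move=> [/eqP dr [-> H]]; split=> // -[|i] //= /H.  by [].
move=> [[Hs] H]; split; first by apply/eqP; exact: (H 0).
by split=> // i Hi; apply: (H i.+1).
Qed.

Lemma rk_lt rs ds : bnd rs ds -> rk rs ds < prodl rs.
Proof.
elim: rs ds => [|r rs IH] [|d ds] //= /andP[dr /IH H]. nia.
Qed.

Lemma rk_inj rs ds ds' : bnd rs ds -> bnd rs ds' -> rk rs ds = rk rs ds' -> ds = ds'.
Proof.
elim: rs ds ds' => [|r rs IH] [|d ds] [|d' ds'] //= /andP[dr B] /andP[dr' B'] E.
have L := rk_lt B; have L' := rk_lt B'.
have Hd : d = d'.
  have := congr1 (fun m => m %/ prodl rs) E.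
  rewrite !divnMDl ?divn_small //; lia.
subst d'; congr (_ :: _); apply: IH => //; lia.
Qed.

Lemma prodl_gt0 rs ds : bnd rs ds -> 0 < prodl rs.
Proof. move=> B; have := rk_lt B; lia. Qed.

Lemma rk_allmx rs ds : bnd rs ds -> allmx rs ds -> rk rs ds = (prodl rs).-1.
Proof.
elim: rs ds => [|r rs IH] [|d ds] //= /andP[dr B] /andP[/eqP dE A].
rewrite (IH _ B A); have := prodl_gt0 B; subst d; nia.
Qed.

Lemma inc_allmx rs ds : allmx rs ds -> inc rs ds = ds.
Proof.
case: rs ds => [|r rs] [|d ds] //= /andP[/eqP dE ->].
case: ifP => //; lia.
Qed.

Lemma bnd_nseq0 rs : all (fun r => 0 < r) rs -> bnd rs (nseq (size rs) 0).
Proof. by elim: rs => //= r rs IH /andP[-> /IH]. Qed.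

Lemma rk_nseq0 rs m : rk rs (nseq m 0) = 0.
Proof. elim: rs m => [|r rs IH] [|m] //=. by rewrite IH. Qed.

Lemma rk_inc rs ds : bnd rs ds -> ~~ allmx rs ds ->
  bnd rs (inc rs ds) /\ rk rs (inc rs ds) = (rk rs ds).+1.
Proof.
elim: rs ds => [|r rs IH] [|d ds] //= /andP[dr B].
case A: (allmx rs ds) => /=.
  rewrite andbT => dn.
  have dr' : d.+1 < r by move: dn dr => /eqP; lia.
  rewrite dr' /= dr' (bnd_size B) bnd_nseq0; last first.
    apply/allP => r' Hr'. apply: contraT; rewrite -eqn0Ngt => /eqP r0.
    move: B; rewrite bndP => -[Hs Hn].
    move: Hr' => /(nthP 0) [i Hi Ei]. by have := Hn i Hi; rewrite Ei r0 ltn0.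
  rewrite rk_nseq0 (rk_allmx B A); split => //.
  have := prodl_gt0 B; case: (prodl rs) => [|P] //= _. rewrite mulSn; lia.
move=> _; have [B' E] := IH _ B (negbT A).
by rewrite dr B' E; split => //; rewrite addnS.
Qed.

Lemma nth_inc rs ds j : bnd rs ds -> j < size rs -> nth 0 ds j != (nth 0 rs j).-1 ->
  (forall i, j < i < size rs -> nth 0 ds i = (nth 0 rs i).-1) ->
  forall i, nth 0 (inc rs ds) i =
    if i < j then nth 0 ds i else if i == j then (nth 0 ds j).+1 else 0.
Proof.
elim: rs ds j => [|r rs IH] [|d ds] [|j] //= /andP[dr B] Hj Hn Hm.
- have A : allmx rs ds.
    apply/allmxP; split; first exact: bnd_size.
    by move=> i Hi; apply: (Hm i.+1).
  rewrite A; have dr' : d.+1 < r by move: Hn dr; lia.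
  rewrite dr' => -[|i] //=. by rewrite nth_nseq if_same.
- have A : allmx rs ds = false.
    by apply/negP => /allmxP [_ H]; move: Hn; rewrite (H j Hj) eqxx.
  rewrite A => -[|i] //=.
  rewrite (IH ds j B Hj Hn) //.
  by move=> i' Hi'; apply: (Hm i'.+1).
Qed.

Section Builders.
Variable Sigma : finType.
Local Notation K := (SigmaSig Sigma).

Definition no0 {T : Type} (i : 'I_0) : T. Proof. by case: i. Defined.
Definition tmin {V} : term K V := @TApp K V Smin no0.
Definition tmax {V} : term K V := @TApp K V Smax no0.
Definition tS {V} (t : term K V) : term K V := @TApp K V Ssucc (fun _ => t).
Definition tnum {V} (i : nat) : term K V := iter i tS tmin.
Fixpoint bigAnd {V} (l : seq (formula K V)) : formula K V :=
  if l is p :: l' then FAnd p (bigAnd l') else FTrue.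
Fixpoint bigOr {V} (l : seq (formula K V)) : formula K V :=
  if l is p :: l' then FOr p (bigOr l') else FFalse.
Definition fbool {V} (b : bool) : formula K V := if b then FTrue else FFalse.
Definition eqp {V} (a b : term K V * term K V) : formula K V :=
  FAnd (FEq a.1 b.1) (FEq a.2 b.2).
Definition comp {T} (b : bool) (p : T * T) := if b then p.2 else p.1.

Lemma sat_bigAnd (A : structure K) V (T : eqType) (f : T -> formula K V) s e :
  sat A (bigAnd (map f s)) e <-> forall z, z \in s -> sat A (f z) e.
Proof.
elim: s => [|z s IH] /=; first by split.
rewrite IH; split.
  by move=> [H1 H2] z'; rewrite inE => /orP[/eqP ->|/H2].
by move=> H; split=> [|z' Hz']; apply: H; rewrite inE ?eqxx ?Hz' ?orbT.
Qed.

Lemma sat_bigOr (A : structure K) V (T : eqType) (f : T -> formula K V) s e :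
  sat A (bigOr (map f s)) e <-> exists2 z, z \in s & sat A (f z) e.
Proof.
elim: s => [|z s IH] /=; first by split=> // -[].
rewrite IH; split.
  move=> [H|[z' H1 H2]]; first by exists z; rewrite ?inE ?eqxx.
  by exists z' => //; rewrite inE H1 orbT.
move=> [z']; rewrite inE => /orP[/eqP ->|H1 H2]; first by left.
by right; exists z'.
Qed.

Lemma qfree_bigAnd V (l : seq (formula K V)) : qfree (bigAnd l) = all qfree l.
Proof. by elim: l => //= p l ->. Qed.
Lemma qfree_bigOr V (l : seq (formula K V)) : qfree (bigOr l) = all qfree l.
Proof. by elim: l => //= p l ->. Qed.
Lemma qfree_bigAnd_map V (T : Type) (f : T -> formula K V) s :
  (forall z, qfree (f z)) -> qfree (bigAnd (map f s)).
Proof. by move=> H; elim: s => //= z s ->; rewrite H. Qed.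
Lemma qfree_bigOr_map V (T : Type) (f : T -> formula K V) s :
  (forall z, qfree (f z)) -> qfree (bigOr (map f s)).
Proof. by move=> H; elim: s => //= z s ->; rewrite H. Qed.
Lemma qfree_fbool V b : qfree (fbool (V:=V) b). Proof. by case: b. Qed.

Definition toT (o : option (option Sigma)) : tsym Sigma :=
  match o with None => LEnd | Some None => REnd | Some (Some s) => Sym s end.
Definition ofT (a : tsym Sigma) : option (option Sigma) :=
  match a with LEnd => None | REnd => Some None | Sym s => Some (Some s) end.
Lemma ofTK a : toT (ofT a) = a. Proof. by case: a. Qed.
Definition toM (m : 'I_3) : move :=
  match val m with 0 => MLeft | 1 => MStay | _ => MRight end.
Definition ofM (m : move) : 'I_3 :=
  match m with MLeft => @Ordinal 3 0 isT | MStay => @Ordinal 3 1 isT | MRight => @Ordinal 3 2 isT end.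
Lemma ofMK m : toM (ofM m) = m. Proof. by case: m. Qed.

Variable M : nmfa Sigma.
Local Notation h := (heads M).
Local Notation q := #|state M|.
Definition kk := (h.*2).+2.
Definition cix (j : nat) (b : bool) : 'I_kk := inord (b + j.*2).
Definition dX {V} (X : 'I_kk -> term K V) j := (X (cix j false), X (cix j true)).
Definition tenc {V} (p : nat) : term K V * term K V :=
  if p == 0 then (tmin, tmax) else (tnum p.-1, tmin).
Definition posDom {V} (a : term K V * term K V) : formula K V :=
  FOr (FEq a.2 tmin) (FAnd (FEq a.2 tmax) (FOr (FEq a.1 tmin) (FEq a.1 tmax))).
Definition stDom {V} (a : term K V * term K V) : formula K V :=
  bigOr [seq eqp a (tenc p) | p <- iota 0 q].
Definition ddom {V} j (a : term K V * term K V) : formula K V :=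
  if j == 0 then stDom a else posDom a.
Definition domf : formula K 'I_kk := bigAnd [seq ddom j (dX TVar j) | j <- iota 0 h.+1].
Definition maxt {V} j (a : term K V * term K V) : formula K V :=
  if j == 0 then eqp a (tenc q.-1) else eqp a (tmax, tmax).

Definition readf {V} (a : term K V * term K V) (o : option (option Sigma)) : formula K V :=
  match o with
  | None => eqp a (tmin, tmax)
  | Some None => eqp a (tmax, tmax)
  | Some (Some s) => FAnd (FEq a.2 tmin) (@FRel K V s (fun _ => a.1))
  end.
Definition succf {V} (a b : term K V * term K V) : formula K V :=
  FOr (FAnd (eqp a (tmin, tmax)) (eqp b (tmin, tmin)))
   (FOr (FAnd (FAnd (FEq a.2 tmin) (FNot (FEq a.1 tmax))) (eqp b (tS a.1, tmin)))
        (FAnd (eqp a (tmax, tmin)) (eqp b (tmax, tmax)))).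
Definition stepf {V} (a b : term K V * term K V) (m : 'I_3) : formula K V :=
  match val m with
  | 0 => FOr (FAnd (eqp a (tmin, tmax)) (eqp b (tmin, tmax))) (succf b a)
  | 1 => eqp b a
  | _ => succf a b
  end.

Notation EI := (state M * state M * {ffun 'I_h -> option (option Sigma)} * {ffun 'I_h -> 'I_3})%type.
Definition Ecase {V} (X Y : 'I_kk -> term K V) (z : EI) : formula K V :=
  bigAnd [:: eqp (dX X 0) (tenc (enum_rank z.1.1.1));
             eqp (dX Y 0) (tenc (enum_rank z.1.1.2));
             fbool (delta z.1.1.1 [ffun i => toT (z.1.2 i)] z.1.1.2 [ffun i => toM (z.2 i)]);
             bigAnd [seq FAnd (readf (dX X i.+1) (z.1.2 i)) (stepf (dX X i.+1) (dX Y i.+1) (z.2 i))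
                    | i : 'I_h <- enum 'I_h]].
Definition Ef : formula K ('I_2 * 'I_kk) :=
  bigOr [seq Ecase (fun i => TVar (ord0, i)) (fun i => TVar (ord_max, i)) z | z <- enum {: EI}].

Definition cconst (d0 : nat) : fcases K 0 kk :=
  [:: (FTrue, fun i : 'I_kk => if i./2 == 0 then comp (odd i) (tenc d0) else comp (odd i) (tmin, tmax))].
Definition cmaxF : fcases K 0 kk :=
  [:: (FTrue, fun i : 'I_kk => if i./2 == 0 then comp (odd i) (tenc q.-1) else comp (odd i) (tmax, tmax))].

Definition sub {V} (s : nat) (a : term K V * term K V) : formula K V * (term K V * term K V) :=
  match s with
  | 0 => (eqp a (tmin, tmax), (tmin, tmin))
  | 1 => (FAnd (FEq a.2 tmin) (FNot (FEq a.1 tmax)), (tS a.1, tmin))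
  | _ => (eqp a (tmax, tmin), (tmax, tmax))
  end.
Definition XS : 'I_kk -> term K ('I_1 * 'I_kk) := fun i => TVar (ord0, i).
Definition caseJ (j s : nat) : formula K ('I_1 * 'I_kk) * ('I_kk -> term K ('I_1 * 'I_kk)) :=
  (bigAnd [:: bigAnd [seq maxt j' (dX XS j') | j' <- iota j.+1 (h - j)];
              FNot (maxt j (dX XS j)); (sub s (dX XS j)).1],
   fun i : 'I_kk => if i./2 < j then XS i
                    else if i./2 == j then comp (odd i) (sub s (dX XS j)).2
                    else comp (odd i) (tmin, tmax)).
Definition caseAll : formula K ('I_1 * 'I_kk) * ('I_kk -> term K ('I_1 * 'I_kk)) :=
  (bigAnd [seq maxt j (dX XS j) | j <- iota 0 h.+1], XS).
Definition cidx : seq (option (nat * nat)) :=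
  None :: [seq Some (j, s) | j <- iota 0 h.+1, s <- iota 0 3].
Definition cfun (z : option (nat * nat)) :=
  if z is Some (j, s) then caseJ j s else caseAll.
Definition cSF : fcases K 1 kk := map cfun cidx.

Definition piM : interp Gamma2 K :=
  @MkInterp Gamma2 K kk domf (fun _ => Ef)
    (fun f => if f is G2s then cconst (enum_rank (q_start M)) else cconst (enum_rank (q_acc M))).

Lemma qfree_tenc_eqp V (a : term K V * term K V) p : qfree (eqp a (tenc p)).
Proof. by []. Qed.

Lemma qfree_maxt V j (a : term K V * term K V) : qfree (maxt j a).
Proof. by rewrite /maxt; case: (j == 0). Qed.

Lemma qfree_domf : qfree domf.
Proof.
apply: qfree_bigAnd_map => j.
rewrite /ddom; case: (j == 0) => //.
by apply: qfree_bigOr_map.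
Qed.

Lemma qfree_Ef : qfree Ef.
Proof.
apply: qfree_bigOr_map => z.
rewrite /Ecase /= qfree_fbool /= andbT; apply: qfree_bigAnd_map => i /=.
apply/andP; split; first by case: (z.1.2 i) => [[s|]|].
rewrite /stepf; case: (val (z.2 i)) => [|[|]] //.
Qed.

Lemma qf_piM : qf_interp piM.
Proof.
split; [exact: qfree_domf | move=> r; exact: qfree_Ef | by case].
Qed.

Lemma qf_cSF : all (fun c => qfree c.1) cSF.
Proof.
rewrite /cSF all_map; apply/allP => z _; case: z => [[j s]|] /=.
  rewrite /= qfree_maxt andbT; apply/andP; split.
    by apply: qfree_bigAnd_map => j'; exact: qfree_maxt.
  by case: s => [|[|s]].
by apply: qfree_bigAnd_map => j'; exact: qfree_maxt.
Qed.

End Builders.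
Arguments tmin {Sigma V}. Arguments tmax {Sigma V}.
Arguments tnum {Sigma V} i.
Arguments tenc {Sigma V} p.
Arguments fbool {Sigma V} b.

Section Sem.
Variable Sigma : finType.
Local Notation K := (SigmaSig Sigma).
Variables (n : nat) (x : n.+1.-tuple Sigma).
Hypothesis hn : 0 < n.
Local Notation A := (string_struct x).

Definition tv {V} (e : V -> 'I_n.+1) (t : term K V) : nat := val (teval A t e).
Definition tvp {V} (e : V -> 'I_n.+1) (a : term K V * term K V) := (tv e a.1, tv e a.2).

Lemma tv_le V e (t : term K V) : tv e t <= n.
Proof. by rewrite /tv -ltnS ltn_ord. Qed.
Lemma tv_min V e : tv e (tmin : term K V) = 0. Proof. by []. Qed.
Lemma tv_max V e : tv e (tmax : term K V) = n. Proof. by []. Qed.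
Lemma tv_S V e (t : term K V) : tv e (tS t) = minn (tv e t).+1 n.
Proof. by rewrite /tv /= ffunE inordK // ltnS geq_minr. Qed.
Lemma tv_num V e i : i <= n -> tv e (tnum i : term K V) = i.
Proof.
elim: i => [|i IH] Hi //.
rewrite /tnum iterS -/(tnum i) tv_S IH; [lia|lia].
Qed.

Lemma sat_FEq V e (t1 t2 : term K V) : sat A (FEq t1 t2) e <-> tv e t1 = tv e t2.
Proof. by rewrite /tv /=; split => [->|/val_inj]. Qed.
Lemma sat_eqp V e (a b : term K V * term K V) : sat A (eqp a b) e <-> tvp e a = tvp e b.
Proof.
rewrite /eqp /= /tvp /tv; split.
  by move=> [-> ->].
by case=> /val_inj -> /val_inj ->.
Qed.

Lemma sat_and V e (p1 p2 : formula K V) : sat A (FAnd p1 p2) e <-> sat A p1 e /\ sat A p2 e.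
Proof. by []. Qed.
Lemma sat_or V e (p1 p2 : formula K V) : sat A (FOr p1 p2) e <-> sat A p1 e \/ sat A p2 e.
Proof. by []. Qed.
Lemma sat_not V e (p1 : formula K V) : sat A (FNot p1) e <-> ~ sat A p1 e.
Proof. by []. Qed.
Lemma sat_true V e : sat A (FTrue : formula K V) e <-> True.
Proof. by []. Qed.
Lemma sat_fbool V e b : sat A (fbool b : formula K V) e <-> b.
Proof. by case: b. Qed.

Definition enc2 (p : nat) : nat * nat :=
  if p == 0 then (0, n) else if p == n.+2 then (n, n) else (p.-1, 0).
Definition dec2 (uv : nat * nat) : nat :=
  if uv.2 == n then (if uv.1 == 0 then 0 else n.+2) else uv.1.+1.

Lemma enc2_0 : enc2 0 = (0, n). Proof. by []. Qed.
Lemma enc2_1 : enc2 1 = (0, 0). Proof. by []. Qed.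
Lemma enc2_top : enc2 n.+2 = (n, n). Proof. by rewrite /enc2 /= eqxx. Qed.
Lemma enc2_mid p : 0 < p < n.+2 -> enc2 p = (p.-1, 0).
Proof. move=> H; rewrite /enc2 ifF ?ifF //; apply/eqP; lia. Qed.

Lemma enc2_cases p : p < n.+3 -> p = 0 \/ p = n.+2 \/ (0 < p < n.+2).
Proof. lia. Qed.

Lemma dec2K p : p < n.+3 -> dec2 (enc2 p) = p.
Proof.
move=> Hp; have [->|[->|Hm]] := enc2_cases Hp.
- by rewrite enc2_0 /dec2 /= eqxx.
- by rewrite enc2_top /dec2 /= eqxx; case: eqP => //; lia.
- rewrite enc2_mid // /dec2 /=; case: eqP; lia.
Qed.

Lemma enc2_inj p p' : p < n.+3 -> p' < n.+3 -> enc2 p = enc2 p' -> p = p'.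
Proof. by move=> H H' E; rewrite -(dec2K H) -(dec2K H') E. Qed.

Lemma enc2_le p b : p < n.+3 -> comp b (enc2 p) <= n.
Proof.
move=> Hp; have [->|[->|Hm]] := enc2_cases Hp.
- by rewrite enc2_0; case: b.
- by rewrite enc2_top; case: b.
- rewrite enc2_mid //; case: b => /=; lia.
Qed.

Lemma tvp_tenc V e p : p <= n -> tvp e (tenc p : term K V * term K V) = enc2 p.
Proof.
rewrite /tenc /tvp => Hp.
case: eqP => [->|H0] //=.
rewrite enc2_mid; last lia.
by rewrite tv_num ?tv_min //; lia.
Qed.

Lemma eqp_enc V e (a b : term K V * term K V) p p' :
  tvp e a = enc2 p -> tvp e b = enc2 p' -> p < n.+3 -> p' < n.+3 ->
  sat A (eqp a b) e <-> p = p'.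
Proof.
move=> Ha Hb H H'; rewrite sat_eqp Ha Hb; split; first exact: enc2_inj.
by move=> ->.
Qed.

Lemma tvp_minmax V e : tvp e ((tmin, tmax) : term K V * term K V) = enc2 0. Proof. by []. Qed.
Lemma tvp_minmin V e : tvp e ((tmin, tmin) : term K V * term K V) = enc2 1. Proof. by rewrite enc2_1. Qed.
Lemma tvp_maxmax V e : tvp e ((tmax, tmax) : term K V * term K V) = enc2 n.+2. Proof. by rewrite enc2_top. Qed.
Lemma tvp_maxmin V e : tvp e ((tmax, tmin) : term K V * term K V) = enc2 n.+1.
Proof. by rewrite enc2_mid //; lia. Qed.

Lemma sat_posDom V e (a : term K V * term K V) :
  sat A (posDom a) e <-> exists2 p, p < n.+3 & tvp e a = enc2 p.
Proof.
have H1 := tv_le e a.1; have H2 := tv_le e a.2.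
rewrite /posDom !sat_or !sat_and !sat_or !sat_FEq tv_min tv_max; split.
  move=> [E|[E [E'|E']]].
  - exists (tv e a.1).+1; first lia.
    by rewrite enc2_mid /tvp ?E //; lia.
  - by exists 0 => //; rewrite /tvp E E'.
  - by exists n.+2 => //; rewrite enc2_top /tvp E E'.
move=> [p Hp]; rewrite /tvp.
have [->|[->|Hm]] := enc2_cases Hp.
- by rewrite enc2_0 => -[-> ->]; right; split => //; left.
- by rewrite enc2_top => -[-> ->]; right; split => //; right.
- by rewrite enc2_mid // => -[_ ->]; left.
Qed.

Lemma pairP (a b c d : nat) : (a, b) = (c, d) <-> a = c /\ b = d.
Proof. by split => [[-> ->]|[-> ->]]. Qed.

Lemma tvpE V e (a : term K V * term K V) p :
  tvp e a = enc2 p -> tv e a.1 = (enc2 p).1 /\ tv e a.2 = (enc2 p).2.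
Proof. by move=> <-. Qed.

Lemma encE p : p < n.+3 ->
  (p = 0 /\ enc2 p = (0, n)) \/ (p = n.+2 /\ enc2 p = (n, n)) \/
  (0 < p < n.+2 /\ enc2 p = (p.-1, 0)).
Proof.
move=> Hp; have [->|[->|Hm]] := enc2_cases Hp.
- by left.
- by right; left; rewrite enc2_top.
- by right; right; rewrite enc2_mid.
Qed.

Lemma sat_rel V e s (ts : 'I_1 -> term K V) :
  sat A (@FRel K V s ts) e <-> tnth x (teval A (ts ord0) e) = s.
Proof. by rewrite /= ffunE. Qed.

Lemma tape_symE p : tape_sym x p =
  if p == 0 then LEnd else if p == n.+2 then REnd else Sym (nth (thead x) x p.-1).
Proof. by []. Qed.

Lemma sat_readf V e (a : term K V * term K V) p o :
  tvp e a = enc2 p -> p < n.+3 -> sat A (readf a o) e <-> tape_sym x p = toT o.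
Proof.
move=> /tvpE [H1 H2] Hp; rewrite tape_symE.
case: o => [[s|]|].
- rewrite sat_and sat_rel sat_FEq tv_min H2.
  have [[-> E]|[[-> E]|[Hm E]]] := encE Hp; rewrite E /=.
  + by split => [[]|]; [lia|].
  + by rewrite eqxx; split => [[]|]; [lia|].
  + rewrite ifF; last by apply/eqP; lia.
    rewrite ifF; last by apply/eqP; lia.
    have Ea : teval A a.1 e = inord p.-1.
      apply: val_inj => /=; rewrite inordK; last lia.
      by rewrite -[val _]/(tv e a.1) H1 E.
    rewrite Ea (tnth_nth (thead x)) /= inordK; last lia.
    by split => [[_ ->]|[->]].
- rewrite sat_eqp /tvp; cbn [fst snd]; rewrite ?tv_min ?tv_max !pairP H1 H2.
  have [[-> E]|[[-> E]|[Hm E]]] := encE Hp; rewrite E /=.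
  + by split; [case; lia | discriminate].
  + by rewrite eqxx.
  + rewrite ifF; last by apply/eqP; lia.
    rewrite ifF; last by apply/eqP; lia.
    by split; [case; lia | discriminate].
- rewrite sat_eqp /tvp; cbn [fst snd]; rewrite ?tv_min ?tv_max !pairP H1 H2.
  have [[-> E]|[[-> E]|[Hm E]]] := encE Hp; rewrite E /=.
  + by [].
  + by rewrite eqxx; split; [case; lia | discriminate].
  + rewrite ifF; last by apply/eqP; lia.
    rewrite ifF; last by apply/eqP; lia.
    by split; [case; lia | discriminate].
Qed.

Lemma sat_succf V e (a b : term K V * term K V) p p' :
  tvp e a = enc2 p -> tvp e b = enc2 p' -> p < n.+3 -> p' < n.+3 ->
  sat A (succf a b) e <-> p' = p.+1.
Proof.
move=> /tvpE [H1 H2] /tvpE [H1' H2'] Hp Hp'.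
rewrite /succf !sat_or !sat_and sat_not !sat_FEq ?sat_eqp /tvp; cbn [fst snd]; rewrite !tv_min !tv_max !tv_S ?pairP.
rewrite H1 H2 H1' H2'.
have [[-> E]|[[-> E]|[Hm E]]] := encE Hp; rewrite E /=;
have [[-> E']|[[-> E']|[Hm' E']]] := encE Hp'; rewrite E' /=; split; lia.
Qed.

Lemma sat_stepf V e (a b : term K V * term K V) p p' m :
  tvp e a = enc2 p -> tvp e b = enc2 p' -> p < n.+3 -> p' < n.+3 ->
  sat A (stepf a b m) e <-> p' = step p (toM m).
Proof.
move=> Ha Hb Hp Hp'.
case: m => [[|[|[|m]]] Hm] //; rewrite [stepf _ _ _]/= [toM _]/= [step _ _]/=.
- rewrite sat_or sat_and (eqp_enc Ha (tvp_minmax _)) // (eqp_enc Hb (tvp_minmax _)) //.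
  rewrite (sat_succf Hb Ha) //; lia.
- by rewrite (eqp_enc Hb Ha) //.
- by rewrite (sat_succf Ha Hb).
Qed.

Lemma sub_ex V e (a : term K V * term K V) p :
  tvp e a = enc2 p -> p < n.+2 -> exists2 s, s < 3 & sat A (sub s a).1 e.
Proof.
move=> /tvpE [H1 H2] Hp.
have [[? E]|[[? E]|[Hm E]]] := encE (ltnW Hp); subst; first 2 last.
- case: (boolP (p == n.+1)) => [/eqP Ep|Ep].
    exists 2 => //; rewrite [sub _ _]/= sat_eqp /tvp; cbn [fst snd].
    rewrite tv_min tv_max pairP H1 H2 E; cbn [fst snd]; lia.
  exists 1 => //; rewrite [sub _ _]/= sat_and sat_not !sat_FEq tv_min tv_max H1 H2 E.
  cbn [fst snd]; lia.
- exists 0 => //; rewrite [sub _ _]/= sat_eqp /tvp; cbn [fst snd].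
  rewrite tv_min tv_max pairP H1 H2 E; cbn [fst snd]; lia.
- lia.
Qed.

Lemma sub_val V e (a : term K V * term K V) p s :
  tvp e a = enc2 p -> p < n.+2 -> sat A (sub s a).1 e -> tvp e (sub s a).2 = enc2 p.+1.
Proof.
move=> /tvpE [H1 H2] Hp.
have [[? E]|[[? E]|[Hm E]]] := encE (ltnW Hp); subst; try lia;
(case: s => [|[|s]]; rewrite [sub _ _]/=;
  rewrite ?sat_and ?sat_not ?sat_eqp ?sat_FEq /tvp; cbn [fst snd];
  rewrite ?pairP ?tv_min ?tv_max ?tv_S H1 H2 E; cbn [fst snd]).
- lia.
- lia.
- lia.
- lia.
- move=> [Hx Hy]; rewrite enc2_mid; [congr pair; lia| lia].
- move=> [Hx Hy]; have -> : p = n.+1 by lia. by rewrite enc2_top.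
Qed.

End Sem.

Section Conf.
Variable Sigma : finType.
Local Notation K := (SigmaSig Sigma).
Variable M : nmfa Sigma.
Local Notation h := (heads M).
Local Notation q := #|state M|.
Variables (n : nat) (x : n.+1.-tuple Sigma).
Hypothesis hn : 0 < n.
Hypothesis hq : q + 2 <= n.
Local Notation A := (string_struct x).
Local Notation enc2 := (enc2 n).
Local Notation dec2 := (dec2 n).
Local Notation tv := (tv x).
Local Notation tvp := (tvp x).
Local Notation kk := (kk M).

Lemma q_pos : 0 < q.
Proof. by apply/card_gt0P; exists (q_start M). Qed.

Definition r j := if j == 0 then q else n.+3.
Lemma r_le j : r j <= n.+3.
Proof. rewrite /r; case: ifP => _; lia. Qed.

Lemma sat_stDom V e (a : term K V * term K V) :
  sat A (stDom M a) e <-> exists2 p, p < q & tvp e a = enc2 p.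
Proof.
rewrite /stDom sat_bigOr; split.
  move=> [p]; rewrite mem_iota add0n => /andP[_ Hp] H; exists p => //.
  by move/sat_eqp: H => ->; rewrite (tvp_tenc x hn) //; lia.
move=> [p Hp E]; exists p; first by rewrite mem_iota Hp.
by apply/sat_eqp; rewrite E (tvp_tenc x hn) //; lia.
Qed.

Lemma sat_ddom V e j (a : term K V * term K V) :
  sat A (ddom M j a) e <-> exists2 p, p < r j & tvp e a = enc2 p.
Proof.
rewrite /ddom /r; case: (j == 0); first exact: sat_stDom.
exact: (sat_posDom hn).
Qed.

Local Notation T := {ffun 'I_kk -> 'I_n.+1}.
Definition tdig (t : T) j := (val (t (cix M j false)), val (t (cix M j true))).

Lemma val_cix j b : j < h.+1 -> val (cix M j b) = b + j.*2.
Proof. move=> Hj; rewrite /cix /= inordK //; rewrite /kk; case: b => /=; lia. Qed.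

Lemma tvp_dX V e (X : 'I_kk -> term K V) (t : T) j :
  (forall i, teval A (X i) e = t i) -> tvp e (dX X j) = tdig t j.
Proof. by move=> H; rewrite /tvp /dX /tdig /tv; cbn [fst snd]; rewrite !H. Qed.

Definition tdom (t : T) := forall j, j < h.+1 -> exists2 p, p < r j & tdig t j = enc2 p.

Lemma sat_domf (t : T) : sat A (domf M) (fun i => t i) <-> tdom t.
Proof.
rewrite /domf sat_bigAnd; split.
  move=> H j Hj; have := H j; rewrite mem_iota add0n Hj => /(_ isT).
  by rewrite sat_ddom (tvp_dX _ (t := t)).
move=> H j; rewrite mem_iota add0n => /andP[_ Hj].
by rewrite sat_ddom (tvp_dX _ (t := t)) //; apply: H.
Qed.

Definition rs := q :: nseq h n.+3.
Lemma size_rs : size rs = h.+1. Proof. by rewrite /= size_nseq. Qed.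
Lemma nth_rs j : j < h.+1 -> nth 0 rs j = r j.
Proof. by case: j => [|j] //= Hj; rewrite nth_nseq ifT. Qed.

Definition tdigs (t : T) := [seq dec2 (tdig t j) | j <- iota 0 h.+1].
Lemma size_tdigs t : size (tdigs t) = h.+1. Proof. by rewrite size_map size_iota. Qed.
Lemma nth_tdigs t j : j < h.+1 -> nth 0 (tdigs t) j = dec2 (tdig t j).
Proof. by move=> Hj; rewrite (nth_map 0) ?size_iota // nth_iota. Qed.

Lemma tdom_tdigs t : tdom t ->
  bnd rs (tdigs t) /\ forall j, j < h.+1 -> tdig t j = enc2 (nth 0 (tdigs t) j).
Proof.
move=> H; split.
  apply/bndP; rewrite size_tdigs size_rs; split => // j Hj.
  rewrite nth_tdigs // nth_rs //; have [p Hp ->] := H j Hj.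
  by rewrite (dec2K hn) //; have := r_le j; lia.
move=> j Hj; rewrite nth_tdigs //; have [p Hp ->] := H j Hj.
by rewrite (dec2K hn) //; have := r_le j; lia.
Qed.

Definition encd (ds : seq nat) : T := [ffun i : 'I_kk => inord (comp (odd i) (enc2 (nth 0 ds i./2)))].

Lemma half_lt (i : 'I_kk) : i./2 < h.+1.
Proof. by rewrite ltn_half_double; have := ltn_ord i; rewrite /kk; lia. Qed.

Lemma cixK (i : 'I_kk) : cix M (i./2) (odd i) = i.
Proof. by apply: val_inj; rewrite val_cix ?half_lt // odd_double_half. Qed.

Lemma val_encd ds (i : 'I_kk) : nth 0 ds i./2 < n.+3 ->
  val (encd ds i) = comp (odd i) (enc2 (nth 0 ds i./2)).
Proof. by move=> H; rewrite ffunE /= inordK // ltnS (enc2_le hn). Qed.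

Lemma cix_half j b : j < h.+1 -> (cix M j b)./2 = j /\ odd (cix M j b) = b.
Proof.
move=> Hj; rewrite val_cix // half_bit_double; split => //.
by rewrite oddD odd_double addbF; case: b.
Qed.

Lemma cix_half1 j b : j < h.+1 -> (cix M j b)./2 = j.
Proof. by move=> Hj; have [] := cix_half b Hj. Qed.
Lemma cix_odd j b : j < h.+1 -> odd (cix M j b) = b.
Proof. by move=> Hj; have [] := cix_half b Hj. Qed.

Lemma tdig_encd ds j : j < h.+1 -> nth 0 ds j < n.+3 -> tdig (encd ds) j = enc2 (nth 0 ds j).
Proof.
move=> Hj Hd; rewrite /tdig !val_encd; try by rewrite cix_half1.
rewrite !cix_half1 // !cix_odd //=; by case: (enc2 _).
Qed.

Lemma bnd_le ds j : bnd rs ds -> nth 0 ds j < n.+3.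
Proof.
move/bndP => [Hs H]; case: (ltnP j h.+1) => Hj.
  by have := H j; rewrite size_rs nth_rs // => /(_ Hj); have := r_le j; lia.
by rewrite nth_default // Hs size_rs.
Qed.

Lemma encd_bnd ds : bnd rs ds -> tdom (encd ds) /\ tdigs (encd ds) = ds.
Proof.
move=> B; have [Hs Hn] := (bndP rs ds).1 B.
split.
  move=> j Hj; exists (nth 0 ds j); first by have := Hn j; rewrite size_rs nth_rs //; apply.
  by rewrite tdig_encd // bnd_le.
apply: (@eq_from_nth _ 0); first by rewrite size_tdigs Hs size_rs.
move=> j; rewrite size_tdigs => Hj.
by rewrite nth_tdigs // tdig_encd ?(dec2K hn) ?bnd_le.
Qed.

Lemma tdigs_encd t : tdom t -> encd (tdigs t) = t.
Proof.
move=> /tdom_tdigs [B H]; apply/ffunP => i; apply: val_inj.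
rewrite val_encd ?bnd_le // -H ?half_lt //.
by rewrite -[in RHS](cixK i) /tdig; case: (odd i).
Qed.

Definition dig (c : config M n) : seq nat :=
  (enum_rank c.1 : nat) :: [seq val (c.2 i) | i <- enum 'I_h].
Definition undig (ds : seq nat) : config M n :=
  (nth (q_start M) (enum (state M)) (head 0 ds), [ffun i : 'I_h => inord (nth 0 (behead ds) i)]).

Lemma nth_dig c (i : 'I_h) : nth 0 (dig c) i.+1 = c.2 i.
Proof. by rewrite /= (nth_map i) ?size_enum_ord // nth_ord_enum. Qed.

Lemma dig_bnd c : bnd rs (dig c).
Proof.
apply/bndP; split; first by rewrite /= size_map size_enum_ord size_nseq.
move=> [|j]; rewrite size_rs => Hj /=; first exact: ltn_ord.
rewrite nth_nseq ifT; last lia.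
have Hj' : j < h by lia.
by rewrite (nth_map (Ordinal Hj')) ?size_enum_ord.
Qed.

Lemma undigK c : undig (dig c) = c.
Proof.
case: c => s f; rewrite /undig /= nth_enum_rank; congr pair.
apply/ffunP => i; rewrite ffunE (nth_map i) ?size_enum_ord // nth_ord_enum; exact: inord_val.
Qed.

Lemma enum_rank_nth d : d < q -> val (enum_rank (nth (q_start M) (enum (state M)) d)) = d.
Proof.
move=> Hd; rewrite -(enum_val_nth (q_start M) (Ordinal Hd)).
by rewrite enum_valK.
Qed.

Lemma digK ds : bnd rs ds -> dig (undig ds) = ds.
Proof.
case: ds => [|d ds] /bndP [Hs H]; first by rewrite size_rs in Hs.
rewrite /dig /undig /=; congr cons.
  by apply: enum_rank_nth; have := H 0; rewrite size_rs; apply.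
apply: (@eq_from_nth _ 0); rewrite size_map size_enum_ord.
  by move: Hs; rewrite /= size_nseq; case.
move=> i Hi; rewrite (nth_map (Ordinal Hi)) ?size_enum_ord // ffunE /=.
rewrite nth_enum_ord // inordK //.
by have := H i.+1; rewrite size_rs /= nth_nseq Hi; apply; lia.
Qed.

Lemma dig_inj : injective dig.
Proof. exact: can_inj undigK. Qed.

Lemma val_undig ds (i : 'I_h) : bnd rs ds -> ((undig ds).2 i : nat) = nth 0 ds i.+1.
Proof. by move=> B; rewrite -{2}(digK B) nth_dig. Qed.

Lemma val_undigV ds (i : 'I_h) : bnd rs ds -> val ((undig ds).2 i) = nth 0 ds i.+1.
Proof. exact: val_undig. Qed.

Lemma undig_state ds s : bnd rs ds -> ((undig ds).1 = s <-> nth 0 ds 0 = enum_rank s).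
Proof.
move=> B; rewrite -{2}(digK B) /=; split => [->//|E].
by apply: enum_rank_inj; apply: val_inj.
Qed.

Local Notation I := (idomT (piM M) A).

Lemma tdom_sval (t : I) : tdom (sval t).
Proof. exact: (sat_domf _).1 (svalP t). Qed.

Definition dec (t : I) : config M n := undig (tdigs (sval t)).
Definition enc (c : config M n) : I :=
  exist _ (encd (dig c)) ((sat_domf _).2 (encd_bnd (dig_bnd c)).1).

Lemma encK : cancel enc dec.
Proof. by move=> c; rewrite /dec /enc /= (encd_bnd (dig_bnd c)).2 undigK. Qed.

Lemma decK : cancel dec enc.
Proof.
move=> [v Hv]; rewrite /enc /dec /=; apply: subset_eq_compat.
have Ht := (sat_domf v).1 Hv; have [B _] := tdom_tdigs Ht.
by rewrite digK // tdigs_encd.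
Qed.

Lemma dec_bij : bijective dec.
Proof. exact: Bijective decK encK. Qed.

Lemma sat_cons V e (p : formula K V) l : sat A (bigAnd (p :: l)) e <-> sat A p e /\ sat A (bigAnd l) e.
Proof. by []. Qed.
Lemma sat_nil V e : sat A (bigAnd [::] : formula K V) e <-> True.
Proof. by []. Qed.

Lemma sat_Ecase V e (X Y : 'I_kk -> term K V) (t t' : T) z :
  (forall i, teval A (X i) e = t i) -> (forall i, teval A (Y i) e = t' i) -> tdom t -> tdom t' ->
  sat A (Ecase X Y z) e <->
  [/\ nth 0 (tdigs t) 0 = enum_rank z.1.1.1, nth 0 (tdigs t') 0 = enum_rank z.1.1.2,
      delta z.1.1.1 [ffun i => toT (z.1.2 i)] z.1.1.2 [ffun i => toM (z.2 i)] &
      forall i : 'I_h, tape_sym x (nth 0 (tdigs t) i.+1) = toT (z.1.2 i) /\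
        nth 0 (tdigs t') i.+1 = step (nth 0 (tdigs t) i.+1) (toM (z.2 i))].
Proof.
move=> HX HY Ht Ht'; have [B Ed] := tdom_tdigs Ht; have [B' Ed'] := tdom_tdigs Ht'.
have Hd j : j < h.+1 -> tvp e (dX X j) = enc2 (nth 0 (tdigs t) j) by move=> Hj; rewrite (tvp_dX _ HX) Ed.
have Hd' j : j < h.+1 -> tvp e (dX Y j) = enc2 (nth 0 (tdigs t') j) by move=> Hj; rewrite (tvp_dX _ HY) Ed'.
have Hr (s : state M) : (enum_rank s : nat) <= n by have : (enum_rank s : nat) < q := ltn_ord _; lia.
rewrite /Ecase !sat_cons sat_nil sat_fbool.
rewrite (eqp_enc hn (Hd 0 isT) (tvp_tenc x hn e (Hr _))) ?bnd_le //; last by have := Hr z.1.1.1; lia.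
rewrite (eqp_enc hn (Hd' 0 isT) (tvp_tenc x hn e (Hr _))) ?bnd_le //; last by have := Hr z.1.1.2; lia.
rewrite sat_bigAnd; split.
  move=> [E1 [E2 [Hdel [H _]]]]; split => // i.
  have := H i (mem_enum _ i); rewrite sat_and => -[H1 H2].
  have Hi : i.+1 < h.+1 by rewrite ltnS.
  rewrite (sat_readf hn _ (Hd _ Hi)) ?bnd_le // in H1.
  by rewrite (sat_stepf hn _ (Hd _ Hi) (Hd' _ Hi)) ?bnd_le // in H2.
move=> [E1 E2 Hdel H]; do 3 (split => //); split => // i _.
have Hi : i.+1 < h.+1 by rewrite ltnS.
rewrite sat_and (sat_readf hn _ (Hd _ Hi)) ?bnd_le //.
by rewrite (sat_stepf hn _ (Hd _ Hi) (Hd' _ Hi)) ?bnd_le //; apply: H.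
Qed.

Lemma sat_Ef (a : {ffun 'I_2 -> I}) :
  sat A (Ef M) (tuple_env a) <-> cedge M x (dec (a ord0)) (dec (a ord_max)).
Proof.
have Ht := tdom_sval (a ord0); have Ht' := tdom_sval (a ord_max).
have [B _] := tdom_tdigs Ht; have [B' _] := tdom_tdigs Ht'.
rewrite /Ef sat_bigOr; split.
- move=> [[[[s s'] ao] mo] _].
  rewrite (sat_Ecase (t := sval (a ord0)) (t' := sval (a ord_max))) // => -[E0 E0' Hdel Hi].
  exists [ffun i => toM (mo i)]; split.
  + have -> : (dec (a ord0)).1 = s by apply/undig_state.
    have -> : (dec (a ord_max)).1 = s' by apply/undig_state.
    suff -> : [ffun i => tape_sym x ((dec (a ord0)).2 i)] = [ffun i => toT (ao i)] by [].
    by apply/ffunP => i; rewrite [LHS]ffunE [RHS]ffunE /dec val_undig //; exact: (Hi i).1.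
  + move=> i; rewrite /dec val_undigV // val_undig // ffunE; exact: (Hi i).2.
- move=> [m [Hdel Hst]].
  exists ((dec (a ord0)).1, (dec (a ord_max)).1,
          [ffun i => ofT (tape_sym x ((dec (a ord0)).2 i))], [ffun i => ofM (m i)]);
    first by rewrite mem_enum.
  rewrite (sat_Ecase (t := sval (a ord0)) (t' := sval (a ord_max))) //; split.
  + by rewrite -(undig_state _ B).
  + by rewrite -(undig_state _ B').
  + have -> : [ffun i => toT ([ffun i => ofT (tape_sym x ((dec (a ord0)).2 i))] i)]
              = [ffun i => tape_sym x ((dec (a ord0)).2 i)] by apply/ffunP => i; rewrite !ffunE ofTK.
    have -> : [ffun i => toM ([ffun i => ofM (m i)] i)] = m by apply/ffunP => i; rewrite !ffunE ofMK.
    exact: Hdel.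
  + move=> i; rewrite !ffunE ofTK ofMK -(val_undig i B) -(val_undigV i B'); split => //; by rewrite [in LHS]ffunE.
Qed.

Lemma teval_eqv V e (t : term K V) (o : 'I_n.+1) : tv e t = val o -> teval A t e = o.
Proof. by move=> H; apply: val_inj. Qed.

Lemma tv_comp V e b (a : term K V * term K V) : tv e (comp b a) = comp b (tvp e a).
Proof. by case: b. Qed.

Lemma bnd_nseq m c d : d < c -> bnd (nseq m c) (nseq m d).
Proof. by move=> H; elim: m => //= m ->; rewrite H. Qed.
Lemma allmx_nseq m c : allmx (nseq m c) (nseq m c.-1).
Proof. by elim: m => //= m ->; rewrite eqxx. Qed.

Lemma bnd_const d0 : d0 < q -> bnd rs (d0 :: nseq h 0).
Proof. by move=> Hd; rewrite /= Hd bnd_nseq. Qed.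

Lemma bnd_max : bnd rs (q.-1 :: nseq h n.+2).
Proof. rewrite /= (_ : q.-1 < q); last by have := q_pos; lia. by rewrite bnd_nseq. Qed.

Lemma allmx_max : allmx rs (q.-1 :: nseq h n.+2).
Proof. by rewrite /= eqxx (allmx_nseq h n.+3). Qed.

Lemma undig_const (s : state M) : undig ((enum_rank s : nat) :: nseq h 0) = (s, [ffun _ => ord0]).
Proof.
rewrite /undig /= nth_enum_rank; congr pair; apply/ffunP => i; rewrite !ffunE.
by apply: val_inj; rewrite /= nth_nseq if_same inordK.
Qed.

Lemma iso_const d0 (a : {ffun 'I_0 -> I}) : d0 < q ->
  exists w : I, case_value A (cconst M d0) (tuple_env a) (fun i => sval w i) /\
                dec w = undig (d0 :: nseq h 0).
Proof.
move=> Hd; exists (enc (undig (d0 :: nseq h 0))); split; last exact: encK.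
left; split => // i; apply: teval_eqv.
rewrite /enc /= val_encd ?bnd_le ?dig_bnd // digK ?bnd_const //.
case: eqP => [E|E]; rewrite tv_comp; first rewrite E.
  by rewrite /= (tvp_tenc x hn) //; lia.
by case: (i./2) E => [|j] //= _; rewrite nth_nseq if_same.
Qed.

Lemma iso_max (a : {ffun 'I_0 -> I}) :
  exists w : I, case_value A (cmaxF M) (tuple_env a) (fun i => sval w i) /\
                dec w = undig (q.-1 :: nseq h n.+2).
Proof.
exists (enc (undig (q.-1 :: nseq h n.+2))); split; last exact: encK.
left; split => // i; apply: teval_eqv.
rewrite /enc /= val_encd ?bnd_le ?dig_bnd // digK ?bnd_max //.
case: eqP => [E|E]; rewrite tv_comp; first rewrite E.
  rewrite /= (tvp_tenc x hn) //; apply: leq_trans (leq_pred _) _; exact: leq_trans (leq_addr 2 _) hq.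
have := half_lt i; case: (i./2) E => [|j] //= _ Hj; rewrite nth_nseq ifT //.
by rewrite (tvp_maxmax x).
Qed.

Definition succ (c : config M n) : config M n := undig (inc rs (dig c)).
Definition cminc : config M n := undig (0 :: nseq h 0).
Definition cmaxc : config M n := undig (q.-1 :: nseq h n.+2).

Lemma bnd_inc ds : bnd rs ds -> bnd rs (inc rs ds).
Proof.
move=> B; case: (boolP (allmx rs ds)) => Hm; first by rewrite inc_allmx.
exact: (rk_inc B Hm).1.
Qed.

Lemma dig_succ c : dig (succ c) = inc rs (dig c).
Proof. by rewrite /succ digK // bnd_inc // dig_bnd. Qed.

Lemma q_le : q <= n. Proof. exact: leq_trans (leq_addr 2 _) hq. Qed.
Lemma qm1_le : q.-1 <= n. Proof. exact: leq_trans (leq_pred _) q_le. Qed.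

Lemma sat_maxt V e j (a : term K V * term K V) p :
  tvp e a = enc2 p -> p < r j -> sat A (maxt M j a) e <-> p = (r j).-1.
Proof.
rewrite /maxt /r; case: (j == 0) => Ha Hp.
  have H1 := q_le; have H2 := qm1_le.
  rewrite (eqp_enc hn Ha (tvp_tenc x hn e H2)) //.
  - by apply: leq_trans Hp _; lia.
  - by apply: leq_ltn_trans H2 _; lia.
by rewrite (eqp_enc hn Ha (tvp_maxmax x e)).
Qed.

Lemma case_value_map V k' (Z : eqType) (f : Z -> formula K V * ('I_k' -> term K V))
    (zs : seq Z) e (w : 'I_k' -> 'I_n.+1) :
  (exists2 z, z \in zs & sat A (f z).1 e) ->
  (forall z, z \in zs -> sat A (f z).1 e -> forall i, teval A ((f z).2 i) e = w i) ->
  case_value A (map f zs) e w.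
Proof.
elim: zs => [[z]//|z zs IH] [z' Hz' Hs] Hall /=.
case: (classic (sat A (f z).1 e)) => Hc.
  by left; split => //; apply: Hall => //; rewrite inE eqxx.
right; split => //; apply: IH.
  exists z' => //; move: Hz'; rewrite inE => /orP[/eqP Ez|] //; by subst.
by move=> z'' Hz''; apply: Hall; rewrite inE Hz'' orbT.
Qed.

Section Tup.
Variables (e : 'I_1 * 'I_kk -> 'I_n.+1) (t : T).
Hypothesis HX : forall i, teval A (@XS _ M i) e = t i.
Hypothesis Ht : tdom t.

Lemma Hd j : j < h.+1 -> tvp e (dX (@XS _ M) j) = enc2 (nth 0 (tdigs t) j).
Proof. by move=> Hj; rewrite (tvp_dX _ HX) (tdom_tdigs Ht).2. Qed.

Lemma Hb j : j < h.+1 -> nth 0 (tdigs t) j < r j.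
Proof.
move=> Hj; have [/bndP [_ H] _] := tdom_tdigs Ht.
by have := H j; rewrite size_rs nth_rs //; apply.
Qed.

Lemma sat_caseAll : sat A (caseAll M).1 e <-> allmx rs (tdigs t).
Proof.
have [B _] := tdom_tdigs Ht.
rewrite sat_bigAnd allmxP size_rs (bnd_size B) size_rs; split.
  move=> H; split => // j Hj; rewrite nth_rs //.
  by apply/(sat_maxt (Hd Hj) (Hb Hj)); apply: H; rewrite mem_iota.
move=> [_ H] j; rewrite mem_iota add0n => /andP[_ Hj].
by apply/(sat_maxt (Hd Hj) (Hb Hj)); rewrite -nth_rs //; apply: H.
Qed.

Lemma sat_caseJ j s : j < h.+1 ->
  sat A (caseJ M j s).1 e <->
  [/\ forall j', j < j' < h.+1 -> nth 0 (tdigs t) j' = (nth 0 rs j').-1,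
      nth 0 (tdigs t) j != (nth 0 rs j).-1 &
      sat A (sub s (dX (@XS _ M) j)).1 e].
Proof.
move=> Hj; rewrite /caseJ !sat_cons sat_nil sat_not sat_bigAnd.
rewrite (sat_maxt (Hd Hj) (Hb Hj)) -nth_rs //; split.
  move=> [H1 [H2 [H3 _]]]; split => //; last by apply/eqP.
  move=> j' /andP[H H']; rewrite nth_rs //.
  apply/(sat_maxt (Hd H') (Hb H')); apply: H1; rewrite mem_iota H /=; lia.
move=> [H1 /eqP H2 H3]; split; last by do !split.
move=> j'; rewrite mem_iota => /andP[H H'].
have Hj' : j' < h.+1 by lia.
by apply/(sat_maxt (Hd Hj') (Hb Hj')); rewrite -nth_rs //; apply: H1; rewrite H /=.
Qed.

Lemma caseJ_val j s : j < h.+1 -> sat A (caseJ M j s).1 e ->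
  forall i, teval A ((caseJ M j s).2 i) e = encd (inc rs (tdigs t)) i.
Proof.
move=> Hj /(sat_caseJ _ Hj) [Hm Hn Hs] i; apply: teval_eqv.
have [B Ed] := tdom_tdigs Ht.
rewrite val_encd; last by apply: bnd_le; apply: bnd_inc.
rewrite (nth_inc (j := j) B) ?size_rs //.
rewrite /caseJ; cbn [snd].
case: ltnP => Hij.
  rewrite -Ed ?half_lt // /tv HX /tdig -[in LHS](cixK i).
  by case: (odd i).
case: eqP => [Eij|Eij].
  have Hp : nth 0 (tdigs t) j < n.+2.
    move: (Hb Hj) Hn (r_le j); rewrite nth_rs //; case: (r j) => [|R] //=; lia.
  by rewrite tv_comp (sub_val hn (Hd Hj) Hp Hs).
by rewrite tv_comp (tvp_minmax x).
Qed.

Lemma cases_ex : ~~ allmx rs (tdigs t) ->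
  exists2 j, j < h.+1 & (nth 0 (tdigs t) j != (nth 0 rs j).-1 /\
    forall i, j < i < h.+1 -> nth 0 (tdigs t) i = (nth 0 rs i).-1).
Proof.
have [B _] := tdom_tdigs Ht; move=> Hm.
set P := fun j => (j < h.+1) && (nth 0 (tdigs t) j != (nth 0 rs j).-1).
have ex : exists j, P j.
  apply: NNPP => Hne; move/negP: Hm; apply; apply/allmxP; split; first by rewrite (bnd_size B).
  move=> i Hi; apply/eqP; apply: contraT => Hi'; case: Hne; exists i.
  by rewrite /P Hi' andbT -size_rs.
have ub : forall j, P j -> j <= h by move=> j /andP[]; rewrite ltnS.
case: (ex_maxnP ex ub) => j /andP[Hj Hn] Hmax.
exists j => //; split => // i /andP[Hij Hih]; apply/eqP; apply: contraT => Hne.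
by have := Hmax i; rewrite /P Hih Hne => /(_ isT); lia.
Qed.

End Tup.

Lemma iso_succ (a : {ffun 'I_1 -> I}) :
  exists w : I, case_value A (cSF M) (tuple_env a) (fun i => sval w i) /\
                dec w = succ (dec (a ord0)).
Proof.
set t := sval (a ord0).
have Ht := tdom_sval (a ord0); have [B Ed] := tdom_tdigs Ht.
have HX : forall i, teval A (@XS _ M i) (tuple_env a) = t i by [].
exists (enc (succ (dec (a ord0)))); split; last exact: encK.
have -> : sval (enc (succ (dec (a ord0)))) = encd (inc rs (tdigs t)).
  by rewrite /= dig_succ /dec digK.
apply: case_value_map.
- case: (boolP (allmx rs (tdigs t))) => Hm.
    exists None; first by rewrite inE eqxx.
    by apply/(sat_caseAll HX Ht).
  have [j Hj [Hn Hmx]] := cases_ex Ht Hm.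
  have Hp : nth 0 (tdigs t) j < n.+2.
    move: (Hb Ht Hj) Hn (r_le j); rewrite /t nth_rs //; case: (r j) => [|R] //=; lia.
  have [s Hs Hsat] := sub_ex hn (Hd HX Ht Hj) Hp.
  exists (Some (j, s)).
    rewrite inE; apply/orP; right; apply/allpairsP; exists (j, s).
    by rewrite !mem_iota /= Hj Hs.
  by apply/(sat_caseJ HX Ht _ Hj); split => //.
- move=> [[j s]|] Hz Hsat i.
    have Hj : j < h.+1.
      move: Hz; rewrite inE => /allpairsP [[j' s'] [H1 _ [-> _]]].
      by move: H1; rewrite mem_iota.
    exact: (caseJ_val HX Ht Hj Hsat).
  move/(sat_caseAll HX Ht): Hsat => Hm.
  by rewrite inc_allmx // tdigs_encd.
Qed.

Definition Bst : structure Gamma2S :=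
  @MkStruct Gamma2S (config M n)
    (fun _ (a : {ffun 'I_2 -> config M n}) => cedge M x (a ord0) (a ord_max))
    (fun f => match f return {ffun 'I_(G2S_ar f) -> config M n} -> config M n with
              | GSs => fun _ => (q_start M, [ffun _ => ord0])
              | GSt => fun _ => (q_acc M, [ffun _ => ord0])
              | GSmin => fun _ => cminc
              | GSmax => fun _ => cmaxc
              | GSsucc => fun a => succ (a ord0)
              end).

Lemma reduct_iso : struct_iso (reduct Bst) (config_graph M x).
Proof.
exists id; split.
- by exists id.
- by move=> r a; rewrite /= !ffunE.
- by case.
Qed.

Definition ltc (a b : config M n) := rk rs (dig a) < rk rs (dig b).

Lemma rk_eq a b : rk rs (dig a) = rk rs (dig b) -> a = b.
Proof. move=> E; apply: dig_inj; exact: rk_inj (dig_bnd a) (dig_bnd b) E. Qed.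

Lemma rk_cmin : rk rs (dig cminc) = 0.
Proof. by rewrite /cminc digK ?bnd_const ?q_pos // (rk_nseq0 rs h.+1). Qed.

Lemma rk_cmax : rk rs (dig cmaxc) = (prodl rs).-1.
Proof. by rewrite /cmaxc digK ?bnd_max // (rk_allmx bnd_max allmx_max). Qed.

Lemma succ_exp : is_succ_expansion Bst.
Proof.
have E1 : fun_i Bst GSmin noargs = cminc by [].
have E2 : fun_i Bst GSmax noargs = cmaxc by [].
have E3 b : fun_i Bst GSsucc [ffun _ : 'I_1 => b] = succ b by rewrite /= ffunE.
exists ltc; split; [split|split; [|split; [|split]]].
- by move=> a; rewrite /ltc ltnn.
- move=> a b c; rewrite /ltc; exact: ltn_trans.
- move=> a b Hab; rewrite /ltc.
  case: (ltngtP (rk rs (dig a)) (rk rs (dig b))) => H; [by left|by right|].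
  by case: Hab; apply: rk_eq.
- move=> b Hb; rewrite /ltc E1 rk_cmin lt0n; apply/eqP => E; apply: Hb.
  by apply: rk_eq; rewrite E rk_cmin.
- move=> b Hb; rewrite /ltc E2 rk_cmax.
  have := rk_lt (dig_bnd b); have : rk rs (dig b) != (prodl rs).-1.
    by apply/eqP => E; apply: Hb; apply: rk_eq; rewrite E rk_cmax.
  case: (prodl rs) => [|P] //=; lia.
- move=> b; rewrite E2 E3 => Hb.
  have Hm : ~~ allmx rs (dig b).
    apply/negP => Hm; apply: Hb; apply: rk_eq.
    by rewrite rk_cmax (rk_allmx (dig_bnd b) Hm).
  have [_ E] := rk_inc (dig_bnd b) Hm.
  by rewrite /ltc dig_succ E; split => // c [H1 H2]; lia.
- by rewrite E2 E3 /succ /cmaxc digK ?bnd_max // inc_allmx ?allmx_max.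
Qed.

Lemma iso_graph : interp_iso (piM M) A (config_graph M x).
Proof.
exists dec; split.
- exact: dec_bij.
- move=> r a; apply: iff_trans (sat_Ef a) _; by rewrite /= !ffunE.
- case => a.
  + have [w [H1 H2]] := iso_const a (ltn_ord (enum_rank (q_start M))).
    by exists w; split => //; rewrite H2 undig_const.
  + have [w [H1 H2]] := iso_const a (ltn_ord (enum_rank (q_acc M))).
    by exists w; split => //; rewrite H2 undig_const.
Qed.

Lemma iso_B : interp_iso (expand_interp (piM M) (cconst M 0) (cmaxF M) (cSF M)) A Bst.
Proof.
exists dec; split.
- exact: dec_bij.
- move=> r a; apply: iff_trans (sat_Ef a) _; by rewrite /= !ffunE.
- case => a.
  + have [w [H1 H2]] := iso_const a (ltn_ord (enum_rank (q_start M))).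
    by exists w; split => //; rewrite H2 undig_const.
  + have [w [H1 H2]] := iso_const a (ltn_ord (enum_rank (q_acc M))).
    by exists w; split => //; rewrite H2 undig_const.
  + have [w [H1 H2]] := iso_const a q_pos.
    by exists w; split.
  + have [w [H1 H2]] := iso_max a.
    by exists w; split.
  + have [w [H1 H2]] := iso_succ a.
    by exists w; split => //; rewrite H2 /= ffunE.
Qed.

End Conf.

Theorem theorem2 (Sigma : finType) (M : nmfa Sigma) :
  nmfa_wf M ->
  exists pi : interp Gamma2 (SigmaSig Sigma),
    (* pi is quantifier-free *)
    qf_interp pi /\
    (* x^pi is isomorphic to the configuration graph, for long x *)
    (exists N : nat, forall (n : nat) (x : n.+1.-tuple Sigma),
       N <= n.+1 -> interp_iso pi (string_struct x) (config_graph M x)) /\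
    (* pi expands to a quantifier-free (Gamma_2,S)-interpretation whose
       x^pi is a successor expansion of the configuration graph *)
    (exists (cmin cmax : fcases (SigmaSig Sigma) 0 (iar pi))
            (cS : fcases (SigmaSig Sigma) 1 (iar pi)),
       qf_interp (expand_interp pi cmin cmax cS) /\
       exists N : nat, forall (n : nat) (x : n.+1.-tuple Sigma),
         N <= n.+1 ->
         exists B : structure Gamma2S,
           [/\ struct_iso (reduct B) (config_graph M x),
               is_succ_expansion B &
               interp_iso (expand_interp pi cmin cmax cS) (string_struct x) B]).
Proof.
move=> _; exists (piM M); split; first exact: qf_piM.
split.
  exists (#|state M| + 3) => n x HN.
  apply: iso_graph; lia.
exists (cconst M 0), (cmaxF M), (cSF M); split.
  have [H1 H2 H3] := qf_piM M.
  split => // -[] //=; exact: qf_cSF.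
exists (#|state M| + 3) => n x HN.
have hn : 0 < n by lia.
have hq : #|state M| + 2 <= n by lia.
exists (Bst M x); split.
- exact: reduct_iso.
- exact: (succ_exp x hn hq).
- exact: (iso_B x hn hq).
Qed.
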